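(* For every graph $G$ and every distension $\widehat{G}$ of $G$, we have $\operatorname{tw}(\widehat{G})\leq\max\{\operatorname{tw}(G),3\}$ and $\operatorname{pw}(\widehat{G})\leq\operatorname{pw}(G)+2$.
   Context: All graphs are finite, simple and undirected. $\operatorname{tw}$ and $\operatorname{pw}$ denote treewidth and pathwidth. A distension of a graph $G$ is any graph $\widehat{G}$ obtained from $G$ by adding, for each edge $vw\in E(G)$, a new path $P_{vw}$ (with at least one vertex) each of whose vertices is adjacent to both $v$ and $w$, where the paths $P_{vw}$ are vertex-disjoint from $G$ and pairwise vertex-disjoint for distinct edges, and no other edges are added. *)

(* Defs.v *)
From Stdlib Require Import ClassicalEpsilon.
From mathcomp Require Import all_boot.
Set Implicit Arguments. Unset Strict Implicit. Unset Printing Implicit Defensive.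

Definition simple_graph (V : finType) (e : rel V) : Prop :=
  symmetric e /\ irreflexive e.

Definition connected_rel (I : finType) (t : rel I) : Prop :=
  forall x y : I, connect t x y.

Definition acyclic_rel (I : finType) (t : rel I) : Prop :=
  forall (x : I) (p : seq I), uniq (x :: p) -> 2 <= size p -> path t x p ->
    ~~ t (last x p) x.

Definition is_tree (I : finType) (t : rel I) : Prop :=
  simple_graph t /\ connected_rel t /\ acyclic_rel t.

Definition tree_decomposition (V : finType) (e : rel V)
    (I : finType) (t : rel I) (B : I -> {set V}) : Prop :=
  is_tree t /\
  (forall v : V, exists i, v \in B i) /\
  (forall v w : V, e v w -> exists i, (v \in B i) && (w \in B i)) /\
  (forall (v : V) (i j : I), v \in B i -> v \in B j ->
     connect [rel a b | [&& t a b, v \in B a & v \in B b]] i j).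

Definition tw_le (V : finType) (e : rel V) (k : nat) : Prop :=
  exists (I : finType) (t : rel I) (B : I -> {set V}),
    tree_decomposition e t B /\ (\max_(i : I) #|B i| <= k.+1).

Lemma tw_le_exists (V : finType) (e : rel V) : exists k, tw_le e k.
Proof.
exists #|V|; exists unit, (fun _ _ => false), (fun _ => setT).
split; last first.
  by apply/bigmax_leqP => i _; rewrite cardsT leqW.
split.
  split; first by split.
  split; first by case; case; apply: connect0.
  by move=> x [|a [|b p]] //=.
split; first by move=> v; exists tt; rewrite inE.
split; first by move=> v w _; exists tt; rewrite !inE.
by move=> v [] [] _ _; apply: connect0.
Qed.

Definition decP (P : Prop) : bool :=
  if excluded_middle_informative P then true else false.

Lemma decPE (P : Prop) : decP P <-> P.
Proof. by rewrite /decP; case: excluded_middle_informative. Qed.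

Lemma tw_le_existsb (V : finType) (e : rel V) :
  exists k, decP (tw_le e k).
Proof. by case: (tw_le_exists e) => k Hk; exists k; apply/decPE. Qed.

Definition treewidth (V : finType) (e : rel V) : nat :=
  ex_minn (tw_le_existsb e).

Definition path_decomposition (V : finType) (e : rel V) (s : seq {set V}) : Prop :=
  (forall v : V, exists2 X, X \in s & v \in X) /\
  (forall v w : V, e v w -> exists2 X, X \in s & (v \in X) && (w \in X)) /\
  (forall i j k : nat, i <= j -> j <= k -> k < size s ->
     nth set0 s i :&: nth set0 s k \subset nth set0 s j).

Definition pw_le (V : finType) (e : rel V) (k : nat) : Prop :=
  exists s : seq {set V},
    path_decomposition e s /\ (\max_(X <- s) #|X| <= k.+1).

Lemma pw_le_exists (V : finType) (e : rel V) : exists k, pw_le e k.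
Proof.
exists #|V|; exists [:: setT]; split; last first.
  by rewrite big_seq1 cardsT leqW.
split; first by move=> v; exists setT; rewrite ?inE.
split; first by move=> v w _; exists setT; rewrite ?inE.
by move=> [|i] [|j] [|k] //=; rewrite subsetT.
Qed.

Lemma pw_le_existsb (V : finType) (e : rel V) :
  exists k, decP (pw_le e k).
Proof. by case: (pw_le_exists e) => k Hk; exists k; apply/decPE. Qed.

Definition pathwidth (V : finType) (e : rel V) : nat :=
  ex_minn (pw_le_existsb e).

Definition induces_path (W : finType) (f : rel W) (S : {set W}) : Prop :=
  exists s : seq W,
    [/\ s != [::], uniq s, (forall x, (x \in s) = (x \in S)) &
        (forall x y, x \in S -> y \in S ->
           f x y = ((x, y) \in zip s (behead s)) || ((y, x) \in zip s (behead s)))].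

(* (W, f) is a distension of (V, e): i embeds G; every other vertex x is a
   vertex of the new path attached to the edge {end1 x, end2 x} of G. *)
Definition is_distension (V W : finType) (e : rel V) (f : rel W) : Prop :=
  exists (i : V -> W) (end1 end2 : W -> V),
  let new := fun x => x \notin codom i in
  let P := fun v w => [set x | new x & [set end1 x; end2 x] == [set v; w]] in
  injective i /\
  [/\ (forall v w, f (i v) (i w) = e v w),
      (forall x, new x -> e (end1 x) (end2 x)),
      (forall x u, new x -> f x (i u) = (u == end1 x) || (u == end2 x)),
      (forall x y, new x -> new y ->
         [set end1 x; end2 x] != [set end1 y; end2 y] -> f x y = false) &
      (forall v w, e v w -> induces_path f (P v w))].

(* Main.v *)
Require Import Defs.
From mathcomp Require Import all_boot.
From Stdlib Require Import Lia ClassicalEpsilon.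
From mathcomp Require Import zify.
Set Implicit Arguments. Unset Strict Implicit. Unset Printing Implicit Defensive.


Lemma zip_index (T : eqType) (s : seq T) x y :
  uniq s -> (x, y) \in zip s (behead s) -> index y s = (index x s).+1.
Proof.
elim: s => [|a s IH] //= /andP [aNs us].
case: s IH aNs us => [|b s] IH aNs us //=.
rewrite in_cons => /orP [/eqP [-> ->]|H].
  have ab : a != b by apply: contraNneq aNs => ->; rewrite mem_head.
  by rewrite /= eqxx (negbTE ab) eqxx.
have := IH us H.
have xin : x \in b :: s.
  by move: H => /(nthP (x, y)) [k]; rewrite size_zip => Hk Hn;
     have := Hn; rewrite nth_zip_cond size_zip Hk => -[<- _]; apply: mem_nth;
     move: Hk; rewrite /= minnE; case: (size s) => //=; lia.
have yin : y \in b :: s.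
  by move: H => /(nthP (x, y)) [k]; rewrite size_zip => Hk Hn;
     have := Hn; rewrite nth_zip_cond size_zip Hk => -[_ <-];
     move: Hk; rewrite /= => Hk; rewrite -[nth _ s k]/(nth y (b :: s) k.+1); apply: mem_nth;
     move: Hk; rewrite minnE /=; lia.
have hxa : a != x by apply: contraNneq aNs => ->.
have hya : a != y by apply: contraNneq aNs => ->.
move=> E; rewrite [index y _]/= [index x _]/= (negbTE hxa) (negbTE hya).
by move: E => /= ->.
Qed.

Lemma connect_map (T1 T2 : finType) (g : T1 -> T2) (r1 : rel T1) (r2 : rel T2) :
  (forall a b, r1 a b -> r2 (g a) (g b)) ->
  forall a b, connect r1 a b -> connect r2 (g a) (g b).
Proof.
move=> H a b /connectP [p pth ->]; apply/connectP; exists (map g p).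
  by rewrite path_map; apply: sub_path pth => u v /H.
by rewrite last_map.
Qed.

Section Attach.
Variables (I J : finType) (t : rel I) (par : J -> (I + J)%type) (rk : J -> nat).
Hypothesis tree_t : is_tree t.
Hypothesis par_rk : forall x y, par x = inr y -> rk y < rk x.

Definition att (a b : (I + J)%type) : bool :=
  match a, b with
  | inl a, inl b => t a b
  | inl a, inr y => par y == inl a
  | inr x, inl b => par x == inl b
  | inr x, inr y => (par x == inr y) || (par y == inr x)
  end.

Lemma att_sym : symmetric att.
Proof.
case: tree_t => [[ts _] _].
by move=> [a|x] [b|y] //=; rewrite ?ts // orbC.
Qed.

Lemma att_par x : att (inr x) (par x).
Proof. by rewrite /att; case: (par x) => [a|y] //; rewrite eqxx. Qed.

Lemma att_root n x : rk x < n -> exists a, connect att (inr x) (inl a).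
Proof.
elim: n x => [|n IH] x; first by rewrite ltn0.
move=> Hx.
case E: (par x) => [a|y].
  by exists a; apply: connect1; by rewrite -E att_par.
have [a Ha] := IH y (leq_trans (par_rk E) Hx).
exists a; apply: connect_trans Ha; apply: connect1; by rewrite -E att_par.
Qed.

Lemma all_inl (s : seq (I + J)%type) :
  (forall z, z \in s -> if z is inl _ then true else false) ->
  exists s0, s = map inl s0.
Proof.
elim: s => [|z s IH] H; first by exists [::].
have [s0 ->] : exists s0, s = map inl s0 by apply: IH => w ws; apply: H; rewrite in_cons ws orbT.
have := H z (mem_head _ _); case: z H => [a|y] // _ _.
by exists (a :: s0).
Qed.

Lemma att_tree : is_tree att.
Proof.
case: tree_t => [[ts ti] [tc ta]].
split; first split; first exact: att_sym.
  move=> [a|x] /=; first by rewrite ti.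
  by apply/negP => /orP [] /eqP /par_rk; rewrite ltnn.
split.
  have cs : connect_sym att by apply: sym_connect_sym; exact: att_sym.
  have ll : forall a b, connect att (inl a) (inl b).
    by move=> a b; apply: (connect_map (g := inl) (r1 := t)) => //; apply: tc.
  have rl : forall x, exists a, connect att (inr x) (inl a).
    by move=> x; apply: (att_root (n := (rk x).+1)).
  move=> [a|x] [b|y].
  - exact: ll.
  - have [c Hc] := rl y; rewrite cs; apply: connect_trans Hc _; exact: ll.
  - have [c Hc] := rl x; apply: connect_trans Hc _; exact: ll.
  - have [c Hc] := rl x; have [d Hd] := rl y.
    apply: connect_trans Hc _; rewrite cs; apply: connect_trans Hd _; exact: ll.
move=> x p up sp pp; apply/negP => lp.
pose c := x :: p.
have cyc : cycle att c by rewrite /c /= rcons_path pp lp.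
case: (boolP (has (fun z => if z is inr _ then true else false) c)) => [hr|hr].
  move: hr => /hasP [[a|j0]] // j0c _.
  pose P := fun j => inr j \in c.
  have [m Pm mmax] := @arg_maxnP J j0 P rk j0c.
  set r := rot (index (inr m) c) c.
  have ur : uniq r by rewrite rot_uniq.
  have cr : cycle att r by rewrite rot_cycle.
  have sr : 2 < size r by rewrite size_rot /c /=.
  have mr : forall z, z \in r -> z \in c by move=> z; rewrite mem_rot.
  have nb : forall z, z \in c -> att (inr m) z -> z = par m.
    move=> [b|y] zc /=; first by move/eqP.
    case/orP => [/eqP //|/eqP /par_rk]; have := mmax y zc; rewrite /P.
    by move=> H1 H2; have := leq_trans H2 H1; rewrite ltnn.
  move: ur cr sr mr; rewrite /r rot_index // => ur cr sr mr.
  move: ur cr sr mr; case: (drop _ _ ++ take _ _) => [|a1 [|b1 q]] //= ur cr sr mr.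
  move: cr => /= /andP [h1] /andP [_]; rewrite rcons_path => /andP [_ h2].
  have l1 : last b1 q \in b1 :: q by apply: mem_last.
  have e1 : a1 = par m by apply: nb h1; apply: mr; rewrite !in_cons eqxx orbT.
  rewrite att_sym in h2.
  have e2 : last b1 q = par m.
    by apply: nb h2; apply: mr; rewrite !in_cons; move: l1; rewrite in_cons => ->; rewrite !orbT.
  move: ur => /andP [_ /andP [a1q _]].
  by move: a1q; rewrite e1 -e2 l1.
have [c0 c0E] : exists c0, c = map inl c0.
  apply: all_inl => z zc; case: z zc => [a|y] // yc.
  by move: hr => /hasPn /(_ _ yc).
move: c0E up sp pp lp; rewrite /c; case: c0 => [|x0 p0] // [-> ->].
rewrite -map_cons map_inj_uniq; last by move=> u v [].
rewrite size_map path_map last_map => up sp pp lp.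
have := ta x0 p0 up sp pp.
by move/negP; apply.
Qed.

End Attach.



Definition enc M b r p := (b * M + r) * M + p.

Lemma enc_dec M b r p : r < M -> p < M ->
  [/\ enc M b r p %% M = p, enc M b r p %/ M %% M = r & enc M b r p %/ M %/ M = b].
Proof.
move=> rM pM; have M0 : 0 < M by apply: leq_ltn_trans rM.
rewrite /enc divnMDl // (divn_small pM) addn0 divnMDl // (divn_small rM) addn0.
by rewrite modnMDl modnMDl !modn_small.
Qed.

Lemma enc_le M b r p b' r' p' : r < M -> p < M -> r' < M -> p' < M ->
  enc M b r p <= enc M b' r' p' -> b <= b'.
Proof.
move=> h1 h2 h3 h4 H; have [_ _ <-] := enc_dec b h1 h2.
have [_ _ <-] := enc_dec b' h3 h4.
by apply: leq_div2r; apply: leq_div2r.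
Qed.

Lemma enc_inj M b r p b' r' p' : r < M -> p < M -> r' < M -> p' < M ->
  enc M b r p = enc M b' r' p' -> [/\ b = b', r = r' & p = p'].
Proof.
move=> h1 h2 h3 h4 E.
have [a1 a2 a3] := enc_dec b h1 h2; have [b1 b2 b3] := enc_dec b' h3 h4.
by split; [rewrite -a3 -b3 E | rewrite -a2 -b2 E | rewrite -a1 -b1 E].
Qed.

Lemma interval_key (J : eqType) (U : finType) (js : seq J) (key : J -> nat)
  (Bg : J -> {set U}) :
  sorted (fun a b => key a <= key b) js ->
  (forall a b c, a \in js -> b \in js -> c \in js -> key a <= key b -> key b <= key c ->
     Bg a :&: Bg c \subset Bg b) ->
  forall i j k, i <= j -> j <= k -> k < size (map Bg js) ->
  nth set0 (map Bg js) i :&: nth set0 (map Bg js) k \subset nth set0 (map Bg js) j.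
Proof.
case: js => [|j0 js'] // srt H a b c ab bc; set js := j0 :: js'.
rewrite size_map => cs.
have bs : b < size js by apply: leq_ltn_trans cs.
have as' : a < size js by apply: leq_ltn_trans bs.
rewrite !(nth_map j0) //.
have mono := sorted_leq_nth (leT := fun a b => key a <= key b)
  (fun y x z => @leq_trans (key y) (key x) (key z)) (fun x => leqnn (key x)) j0 srt.
apply: H; rewrite ?mem_nth //; apply: mono => //; rewrite inE //.
Qed.



Section Dist.
Variables (V W : finType) (e : rel V) (f : rel W) (i : V -> W) (end1 end2 : W -> V).

Definition newb x := x \notin codom i.
Definition Tx x : {set V} := [set end1 x; end2 x].
Definition Sx x : {set W} := [set y | newb y & Tx y == Tx x].
Definition pathprop (A : {set W}) (s : seq W) : Prop :=
  [/\ s != [::], uniq s, (forall x, (x \in s) = (x \in A)) &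
        (forall x y, x \in A -> y \in A ->
           f x y = ((x, y) \in zip s (behead s)) || ((y, x) \in zip s (behead s)))].
Definition sqA (A : {set W}) : seq W := epsilon (inhabits [::]) (pathprop A).
Definition sq x := sqA (Sx x).
Definition pos x := index x (sq x).
Definition Nx x : {set W} := [set y in Sx x | pos y == (pos x).+1].

Hypothesis fsym : symmetric f.
Hypothesis inj_i : injective i.
Hypothesis Hfi : forall v w, f (i v) (i w) = e v w.
Hypothesis Hend : forall x, newb x -> e (end1 x) (end2 x).
Hypothesis Hfx : forall x u, newb x -> f x (i u) = (u == end1 x) || (u == end2 x).
Hypothesis Hfxy : forall x y, newb x -> newb y -> Tx x != Tx y -> f x y = false.
Hypothesis Hpath : forall v w, e v w ->
  induces_path f [set x | x \notin codom i & [set end1 x; end2 x] == [set v; w]].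

Lemma Sx_self x : newb x -> x \in Sx x.
Proof. by move=> nx; rewrite inE nx eqxx. Qed.

Lemma Sx_T x y : y \in Sx x -> Tx y = Tx x.
Proof. by rewrite inE => /andP [_ /eqP]. Qed.

Lemma Sx_new x y : y \in Sx x -> newb y.
Proof. by rewrite inE => /andP []. Qed.

Lemma Sx_eq x y : y \in Sx x -> Sx y = Sx x.
Proof. by move=> /Sx_T E; apply/setP => z; rewrite !inE E. Qed.

Lemma sq_eq x y : y \in Sx x -> sq y = sq x.
Proof. by move=> /Sx_eq E; rewrite /sq E. Qed.

Lemma sq_spec x : newb x -> pathprop (Sx x) (sq x).
Proof.
move=> nx; rewrite /sq /sqA; apply: epsilon_spec.
by have [s Hs] := Hpath (Hend nx); exists s.
Qed.

Lemma sq_mem x y : newb x -> (y \in sq x) = (y \in Sx x).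
Proof. by move=> /sq_spec [_ _ ->]. Qed.

Lemma sq_uniq x : newb x -> uniq (sq x).
Proof. by move=> /sq_spec []. Qed.

Lemma pos_lt x : newb x -> pos x < size (sq x).
Proof. by move=> nx; rewrite /pos index_mem sq_mem // Sx_self. Qed.

Lemma size_sq x : newb x -> size (sq x) <= #|W|.
Proof. by move=> nx; rewrite -(card_uniqP (sq_uniq nx)) max_card. Qed.

Lemma adj x y : newb x -> newb y -> f x y ->
  y \in Sx x /\ (pos y = (pos x).+1 \/ pos x = (pos y).+1).
Proof.
move=> nx ny fxy.
have yS : y \in Sx x.
  rewrite inE ny /=; apply/negPn/negP => H.
  by rewrite Hfxy // eq_sym in fxy.
split=> //.
have [_ us _ Hf] := sq_spec nx.
move: fxy; rewrite Hf ?Sx_self // /pos (sq_eq yS).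
by case/orP => /(zip_index us) ->; [left|right].
Qed.

Lemma Nx_S x y : y \in Nx x -> y \in Sx x.
Proof. by rewrite inE => /andP []. Qed.

Lemma Nx_new x y : y \in Nx x -> newb y.
Proof. by move=> /Nx_S /Sx_new. Qed.

Lemma Nx_in x y : y \in Sx x -> pos y = (pos x).+1 -> y \in Nx x.
Proof. by move=> yS E; rewrite inE yS E eqxx. Qed.

Lemma card_Nx x : newb x -> #|Nx x| <= 1.
Proof.
move=> nx; rewrite -(cards1 (nth x (sq x) (pos x).+1)).
apply: subset_leq_card; apply/subsetP => y yN; rewrite inE.
have yS := Nx_S yN.
move: yN; rewrite inE => /andP [_ /eqP <-].
by rewrite /pos (sq_eq yS) nth_index // sq_mem.
Qed.

Lemma new_img (A : {set V}) z : newb z -> z \notin i @: A.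
Proof.
move=> nz; apply/negP => /imsetP [u _ E]; move: nz; rewrite /newb E.
by rewrite codom_f.
Qed.

Lemma img_new u x : newb x -> i u != x.
Proof. by move=> nx; apply/eqP => E; move: nx; rewrite /newb -E codom_f. Qed.

Lemma card_newbag x : newb x -> #|i @: Tx x :|: [set x] :|: Nx x| <= 4.
Proof.
move=> nx.
have h1 := (leq_card_setU (i @: Tx x :|: [set x]) (Nx x)).1.
have h2 := (leq_card_setU (i @: Tx x) [set x]).1.
have h3 : #|i @: Tx x| <= 2.
  by apply: leq_trans (leq_imset_card i (Tx x)) _; rewrite /Tx cards2 ltnS leq_b1.
have h4 := card_Nx nx.
rewrite cards1 in h2.
lia.
Qed.


Lemma pw_main k : pw_le e k -> pw_le f (k + 2).
Proof.
move=> [s [[cov [edg itv]] wid]].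
pose n := size s.
pose X (m : nat) := nth set0 s m.
have Xin : forall Y, Y \in s -> exists m : 'I_n, Y = X m.
  move=> Y Ys; have Hi : index Y s < n by rewrite index_mem.
  by exists (Ordinal Hi); rewrite /X /= nth_index.
have Xwid : forall m, #|X m| <= k.+1.
  move=> m; case: (ltnP m n) => mn.
    apply: leq_trans wid; apply: (@leq_bigmax_seq _ s xpredT (fun Y : {set V} => #|Y|)) => //.
    exact: mem_nth.
  by rewrite /X nth_default // cards0.
pose c x := find (fun B : {set V} => Tx x \subset B) s.
have c_has : forall x, newb x -> has (fun B : {set V} => Tx x \subset B) s.
  move=> x nx; have [Y Ys /andP [h1 h2]] := edg _ _ (Hend nx).
  by apply/hasP; exists Y => //; rewrite /Tx subUset !sub1set h1 h2.
have c_lt : forall x, newb x -> c x < n by move=> x /c_has; rewrite has_find.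
have c_sub : forall x, newb x -> Tx x \subset X (c x).
  by move=> x /c_has H; apply: (nth_find set0 H).
pose M := #|{set W}| + #|W| + 1.
pose J := ('I_n + W)%type.
pose blk (j : J) := match j with inl m => val m | inr x => c x end.
pose rr (j : J) := match j with inl m => 0 | inr x => (enum_rank (Sx x)).+1 end.
pose pp (j : J) := match j with inl m => 0 | inr x => pos x end.
pose key (j : J) := enc M (blk j) (rr j) (pp j).
pose Bg (j : J) := match j with
  | inl m => i @: X m
  | inr x => i @: X (c x) :|: [set x] :|: Nx x end.
pose ok (j : J) := match j with inl _ => true | inr x => newb x end.
pose js := sort (fun a b => key a <= key b) [seq j <- enum {: J} | ok j].
have mem_js : forall j, (j \in js) = ok j.
  by move=> j; rewrite mem_sort mem_filter mem_enum andbT.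
have bnd : forall j, ok j -> [/\ rr j < M, pp j < M & blk j < n].
  move=> [m|x] /= okj; first by rewrite /M; split => //; lia.
  have h1 : enum_rank (Sx x) < #|{set W}| by [].
  have h2 := pos_lt okj; have h3 := size_sq okj.
  split; rewrite /M.
  - by rewrite addn1 ltnS (leq_trans h1 (leq_addr _ _)).
  - lia.
  - exact: c_lt.
have key_mono : forall a b, ok a -> ok b -> key a <= key b -> blk a <= blk b.
  move=> a b /bnd [a1 a2 _] /bnd [b1 b2 _]; exact: enc_le.
have key_inj : forall a b, ok a -> ok b -> key a = key b -> a = b.
  move=> a b oa ob; have [a1 a2 _] := bnd a oa; have [b1 b2 _] := bnd b ob.
  move=> /(enc_inj a1 a2 b1 b2) [E1 E2 E3].
  case: a b oa ob E1 E2 E3 {a1 a2 b1 b2} => [ma|xa] [mb|xb] //= oa ob E1 E2 E3.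
  - by congr inl; apply: val_inj.
  - move: E2 => [/val_inj /enum_rank_inj ES].
    have xbS : xb \in Sx xa by rewrite ES Sx_self.
    move: E3; rewrite /pos (sq_eq xbS) => E3.
    have xaS : xa \in sq xa by rewrite sq_mem // Sx_self.
    have xbS' : xb \in sq xa by rewrite sq_mem.
    by congr inr; rewrite -(nth_index xa xaS) -(nth_index xa xbS') E3.
have orig_mem : forall u j, ok j -> (i u \in Bg j) = (u \in X (blk j)).
  move=> u [m|x] /= oj; first by rewrite mem_imset.
  rewrite !inE mem_imset // (negbTE (img_new u oj)) /newb codom_f /=.
  by rewrite !orbF.
have new_mem : forall z j, newb z -> ok j -> z \in Bg j ->
    key j = key (inr z) \/ key j + 1 = key (inr z).
  move=> z [m|x] nz oj /=; first by rewrite (negbTE (new_img _ nz)).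
  rewrite !in_setU (negbTE (new_img _ nz)) in_set1 /= => /orP [/eqP ->|zN]; first by left.
  right; have zS := Nx_S zN; move: zN; rewrite inE zS /= => /eqP pz.
  rewrite /key /= /c (Sx_T zS) (Sx_eq zS) pz /enc; lia.
exists (map Bg js); split; last first.
  apply/bigmax_leqP_seq => Y /mapP [j jin ->] _; rewrite mem_js in jin.
  case: j jin => [m|x] /= oj.
    by apply: leq_trans (leq_imset_card _ _) _; apply: leq_trans (Xwid m) _; lia.
  have h1 := (leq_card_setU (i @: X (c x) :|: [set x]) (Nx x)).1.
  have h2 := (leq_card_setU (i @: X (c x)) [set x]).1.
  have h3 : #|i @: X (c x)| <= k.+1 by apply: leq_trans (leq_imset_card _ _) _.
  have h4 := card_Nx oj.
  rewrite cards1 in h2; lia.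
have inB : forall j, ok j -> Bg j \in map Bg js.
  by move=> j oj; apply: map_f; rewrite mem_js.
split.
  move=> z; case: (boolP (z \in codom i)) => [/codomP [u ->]|nz].
    have [Y Ys uY] := cov u; have [m Em] := Xin Y Ys.
    exists (Bg (inl m)); first exact: inB.
    by rewrite orig_mem //= -Em.
  exists (Bg (inr z)); first exact: inB.
  by rewrite /= !inE eqxx orbT.
split.
  move=> z1 z2 fz.
  case: (boolP (z1 \in codom i)) => [/codomP [u1 E1]|n1];
  case: (boolP (z2 \in codom i)) => [/codomP [u2 E2]|n2].
  - have eu : e u1 u2 by rewrite -Hfi -E1 -E2.
    have [Y Ys /andP [h1 h2]] := edg u1 u2 eu.
    have [m Em] := Xin Y Ys.
    exists (Bg (inl m)); first exact: inB.
    by rewrite E1 E2 !orig_mem //= -Em h1 h2.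
  - exists (Bg (inr z2)); first exact: inB.
    have := c_sub z2 n2; rewrite fsym E1 Hfx // in fz.
    move=> /subsetP sub.
    have uT : u1 \in Tx z2 by rewrite /Tx !inE.
    by rewrite E1 orig_mem //= sub // !inE eqxx !orbT.
  - exists (Bg (inr z1)); first exact: inB.
    have := c_sub z1 n1; rewrite E2 Hfx // in fz.
    move=> /subsetP sub.
    have uT : u2 \in Tx z1 by rewrite /Tx !inE.
    by rewrite E2 orig_mem //= sub // !inE eqxx !orbT.
  - have [zS [E|E]] := adj n1 n2 fz.
      exists (Bg (inr z1)); first exact: inB.
      by rewrite /= !in_setU !in_set1 eqxx (Nx_in zS E) !orbT.
    have zS' : z1 \in Sx z2 by rewrite (Sx_eq zS) Sx_self.
    exists (Bg (inr z2)); first exact: inB.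
    by rewrite /= !in_setU !in_set1 eqxx (Nx_in zS' E) !orbT.
apply: interval_key; first by apply: sort_sorted => a b; apply: leq_total.
move=> a b c0; rewrite !mem_js => oa ob oc kab kbc.
apply/subsetP => z; rewrite inE => /andP [za zc].
case: (boolP (z \in codom i)) => [/codomP [u Ez]|nz].
  move: za zc; rewrite Ez !orig_mem // => za zc.
  have [_ _ lc] := bnd c0 oc.
  have := itv (blk a) (blk b) (blk c0) (key_mono _ _ oa ob kab) (key_mono _ _ ob oc kbc) lc.
  by move=> /subsetP /(_ u); rewrite inE za zc => /(_ isT).
have ha := new_mem z a nz oa za; have hc := new_mem z c0 nz oc zc.
have : key b = key a \/ key b = key c0 by lia.
case=> E; [by rewrite (key_inj _ _ ob oa E) | by rewrite (key_inj _ _ ob oc E)].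
Qed.

Lemma tw_main k : tw_le e k -> tw_le f (maxn k 3).
Proof.
move=> [I [t [B [[tree [cov [edg sub]]] wid]]]].
pose J := {x : W | newb x}.
have anc : forall x : J, exists a : I, Tx (val x) \subset B a.
  move=> x; have [a /andP [h1 h2]] := edg _ _ (Hend (valP x)).
  by exists a; rewrite /Tx subUset !sub1set h1 h2.
pose anchor (x : J) := xchoose (anc x).
have anchorP : forall x : J, Tx (val x) \subset B (anchor x).
  by move=> x; exact: (xchooseP (anc x)).
pose par (x : J) : (I + J)%type :=
  if pos (val x) is q.+1 then inr (insubd x (nth (val x) (sq (val x)) q))
  else inl (anchor x).
pose rk (x : J) := pos (val x).
have par_spec : forall (x y : J) q, pos (val x) = q.+1 -> par x = inr y ->
    [/\ val y \in Sx (val x), pos (val y) = q & Tx (val y) = Tx (val x)].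
  move=> x y q Eq; rewrite /par Eq => -[<-].
  have nx := valP x.
  have qs : q < size (sq (val x)) by have := pos_lt nx; rewrite Eq; lia.
  have wS : nth (val x) (sq (val x)) q \in Sx (val x) by rewrite -sq_mem // mem_nth.
  rewrite val_insubd (Sx_new wS); split => //; last exact: Sx_T.
  by rewrite /pos (sq_eq wS) index_uniq // sq_uniq.
have par_rk : forall x y, par x = inr y -> rk y < rk x.
  move=> x y; rewrite /rk; case E: (pos (val x)) => [|q].
    by rewrite /par E.
  by move=> /(par_spec _ _ _ E) [_ -> _].
have ts : symmetric t by case: tree => [[]].
pose B' (j : (I + J)%type) := match j with
  | inl a => i @: B a
  | inr x => i @: Tx (val x) :|: [set val x] :|: Nx (val x) end.
exists (I + J)%type, (att t par), B'; split; last first.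
  apply/bigmax_leqP => [[a|x]] _ /=.
    have h1 := leq_imset_card i (B a).
    have h2 := leq_trans (@leq_bigmax I (fun a => #|B a|) a) wid.
    have h3 := leq_maxl k 3; lia.
  have h1 := card_newbag (valP x); have h3 := leq_maxr k 3.
  exact (leq_trans h1 (h3 : 4 <= (maxn k 3).+1)).
split; first exact: (att_tree tree par_rk).
split.
  move=> z; case: (boolP (z \in codom i)) => [/codomP [u ->]|nz].
    by have [a ua] := cov u; exists (inl a); rewrite /= mem_imset.
  by exists (inr (Sub z nz : J)); rewrite /= !in_setU in_set1 eqxx orbT.
split.
  move=> z1 z2 fz.
  case: (boolP (z1 \in codom i)) => [/codomP [u1 E1]|n1];
  case: (boolP (z2 \in codom i)) => [/codomP [u2 E2]|n2].
  - have eu : e u1 u2 by rewrite -Hfi -E1 -E2.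
    have [a /andP [h1 h2]] := edg u1 u2 eu.
    by exists (inl a); rewrite /= E1 E2 !mem_imset // h1 h2.
  - exists (inr (Sub z2 n2 : J)); rewrite fsym E1 Hfx // in fz.
    have uT : u1 \in Tx z2 by rewrite /Tx !inE.
    by rewrite /= E1 !in_setU mem_imset // uT /= set11 !orbT.
  - exists (inr (Sub z1 n1 : J)); rewrite E2 Hfx // in fz.
    have uT : u2 \in Tx z1 by rewrite /Tx !inE.
    by rewrite /= E2 !in_setU mem_imset // uT /= set11 !orbT.
  - have [zS [E|E]] := adj n1 n2 fz.
      exists (inr (Sub z1 n1 : J)).
      by rewrite /= !in_setU !in_set1 eqxx (Nx_in zS E) !orbT.
    have zS' : z1 \in Sx z2 by rewrite (Sx_eq zS) Sx_self.
    exists (inr (Sub z2 n2 : J)).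
    by rewrite /= !in_setU !in_set1 eqxx (Nx_in zS' E) !orbT.
move=> z j1 j2 z1 z2.
set tv := [rel a b | [&& att t par a b, z \in B' a & z \in B' b]].
have tvs : connect_sym tv.
  apply: sym_connect_sym => a b /=; rewrite (att_sym par tree) //.
  by case: (att t par b a) => //=; rewrite andbC.
case: (boolP (z \in codom i)) => [/codomP [u Ez]|nz].
  have H : forall j, z \in B' j -> exists a, u \in B a /\ connect tv j (inl a).
    have Hn : forall n (x : J), rk x < n -> u \in Tx (val x) ->
        exists a, u \in B a /\ connect tv (inr x) (inl a).
      elim=> [|n IH] x; first by rewrite ltn0.
      move=> rx ux.
      have zx : z \in B' (inr x) by rewrite /= Ez !in_setU mem_imset // ux.
      case E: (pos (val x)) => [|q].
        have ua : u \in B (anchor x) by apply: (subsetP (anchorP x)).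
        exists (anchor x); split => //; apply: connect1.
        rewrite /= zx Ez mem_imset // ua !andbT.
        by rewrite /par E eqxx.
      case Ep: (par x) => [a|y]; first by move: Ep; rewrite /par E.
      have [_ _ Ty] := par_spec _ _ _ E Ep.
      have uy : u \in Tx (val y) by rewrite Ty.
      have [a [ua ca]] := IH y (leq_trans (par_rk _ _ Ep) rx) uy.
      exists a; split => //; apply: connect_trans ca; apply: connect1.
      rewrite /= zx /= Ez !in_setU mem_imset // uy /= andbT.
      by rewrite Ep eqxx.
    move=> [a|x] /=.
      by rewrite Ez mem_imset // => ua; exists a; split.
    rewrite Ez !in_setU in_set1 (negbTE (img_new u (valP x))) /=.
    case: (boolP (i u \in Nx (val x))) => [/Nx_new|_].
      by rewrite /newb codom_f.
    rewrite !orbF mem_imset // => ux; exact: (Hn (rk x).+1 x (ltnSn _) ux).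
  have [a1 [ua1 c1]] := H j1 z1; have [a2 [ua2 c2]] := H j2 z2.
  apply: connect_trans c1 _; rewrite tvs; apply: connect_trans c2 _; rewrite tvs.
  have CM := @connect_map I (I + J)%type inl [rel a b | [&& t a b, u \in B a & u \in B b]] tv.
  apply: CM; last exact: sub.
  by move=> a b /= /and3P [h1 h2 h3]; rewrite h1 Ez !mem_imset // h2 h3.
pose zz : J := Sub z nz.
have H : forall j, z \in B' j -> connect tv j (inr zz).
  move=> [a|x] /=; first by rewrite (negbTE (new_img _ nz)).
  rewrite !in_setU in_set1 (negbTE (new_img _ nz)) /=.
  case/orP => [/eqP Ex|zN].
    by have -> : x = zz by apply: val_inj.
  apply: connect1.
  have zS := Nx_S zN; move: (zN); rewrite inE zS /= => /eqP pz.
  have -> : par zz = inr x.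
    rewrite /par /= pz; congr inr; apply: val_inj.
    have nxS : val x \in sq z by rewrite (sq_eq zS) sq_mem ?Sx_self // (valP x).
    by rewrite val_insubd /= /pos (sq_eq zS) nth_index -?(sq_eq zS) // (valP x).
  rewrite /= eqxx orbT /= !in_setU in_set1 (negbTE (new_img _ nz)) /= zN orbT /=.
  by rewrite set11 orbT.
by apply: connect_trans (H _ z1) _; rewrite tvs; apply: H.
Qed.

End Dist.

Theorem lemma4p6 (V W : finType) (e : rel V) (f : rel W) :
  simple_graph e -> simple_graph f -> is_distension e f ->
  treewidth f <= maxn (treewidth e) 3 /\ pathwidth f <= pathwidth e + 2.
Proof.
move=> [es ei] [fs fi] [i [end1 [end2 [inj [Hfi Hend Hfx Hfxy Hpath]]]]].
have twe : tw_le e (treewidth e).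
  by rewrite /treewidth; case: ex_minnP => m /decPE.
have pwe : pw_le e (pathwidth e).
  by rewrite /pathwidth; case: ex_minnP => m /decPE.
have twf : forall k, tw_le f k -> treewidth f <= k.
  move=> k Hk; rewrite /treewidth; case: ex_minnP => m _; apply; exact/decPE.
have pwf : forall k, pw_le f k -> pathwidth f <= k.
  move=> k Hk; rewrite /pathwidth; case: ex_minnP => m _; apply; exact/decPE.
split.
  apply: twf; exact: (tw_main fs inj Hfi Hend Hfx Hfxy Hpath twe).
apply: pwf; exact: (pw_main fs inj Hfi Hend Hfx Hfxy Hpath pwe).
Qed.
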